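(* Let $G$ be a finite subgroup of $O(2)\times O(2)\times O(2)$. If the Fitting subgroup $F(G)$ is cyclic, then $G$ belongs to $\mathcal{G}_{1}^{2}$, i.e. $G$ has a cyclic normal subgroup $H$ such that $G/H$ is a $2$-group.
   Context: The Fitting subgroup $F(G)$ is the unique largest nilpotent normal subgroup of $G$. For primes $p,q$, $\mathcal{G}_p^q$ is the class of finite groups $G$ with a normal series $P\trianglelefteq H\trianglelefteq G$ where $P$ is a $p$-group, $H/P$ is cyclic and $G/H$ is a $q$-group; $p=1$ means $P$ is trivial. *)

(* Defs.v *)
From HB Require Import structures.
From mathcomp Require Import all_boot all_order all_algebra all_fingroup all_solvable.
From mathcomp Require Import reals.
Set Implicit Arguments. Unset Strict Implicit. Unset Printing Implicit Defensive.
Import GRing.Theory Num.Theory.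
Local Open Scope ring_scope.

Definition orthogonal2 (R : realType) (A : 'M[R]_2) : Prop := A *m A^T = 1%:M.

(* The finite group G is (isomorphic to) a subgroup of O(2) x O(2) x O(2):
   there are three homomorphisms f1 f2 f3 : G -> O(2) whose product map
   G -> O(2)^3 is injective. *)
Definition subgroup_O2cube (R : realType) (gT : finGroupType) (G : {group gT}) : Prop :=
  exists f1 f2 f3 : gT -> 'M[R]_2,
    [/\ {in G, forall x, [/\ orthogonal2 (f1 x), orthogonal2 (f2 x) & orthogonal2 (f3 x)]},
        {in G &, forall x y, [/\ f1 (x * y)%g = f1 x *m f1 y,
                                 f2 (x * y)%g = f2 x *m f2 y &
                                 f3 (x * y)%g = f3 x *m f3 y]} &
        {in G &, forall x y, f1 x = f1 y -> f2 x = f2 y -> f3 x = f3 y -> x = y}].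

(* Main.v *)
Require Import Defs.
From HB Require Import structures.
From mathcomp Require Import all_boot all_order all_algebra all_fingroup all_solvable.
From mathcomp Require Import reals.
From mathcomp Require Import ring.

Section Helpers.
Import GRing.Theory Num.Theory.
Local Open Scope ring_scope.

Lemma det2 (R : comNzRingType) (A : 'M[R]_2) :
  \det A = A 0 0 * A 1 1 - A 0 1 * A 1 0.
Proof.
rewrite (expand_det_row A 0) !big_ord_recl big_ord0 /cofactor !det_mx11 !mxE /=.
rewrite addr0 expr0 mul1r expr1 mulN1r mulrN.
have E1 : lift 0 (0 : 'I_1) = 1 :> 'I_2 by apply: val_inj.
have E0 : ord0 = 0 :> 'I_2 by apply: val_inj.
have E2 : lift ord0 (ord0 : 'I_1) = 1 :> 'I_2 by apply: val_inj.
have E3 : lift (lift ord0 ord0) (0 : 'I_1) = 0 :> 'I_2 by apply: val_inj.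
have E4 : lift 1 (0 : 'I_1) = 0 :> 'I_2 by apply: val_inj.
by rewrite ?E1 ?E0 ?E2 ?E3 ?E4.
Qed.

Lemma mul2E (R : comNzRingType) (A B : 'M[R]_2) i j :
  (A *m B) i j = A i 0 * B 0 j + A i 1 * B 1 j.
Proof.
have E2 : lift ord0 (ord0 : 'I_1) = 1 :> 'I_2 by apply: val_inj.
by rewrite mxE !big_ord_recl big_ord0 addr0 E2.
Qed.

Lemma orth_det (R : realType) (A : 'M[R]_2) :
  orthogonal2 A -> \det A ^+ 2 = 1.
Proof.
move=> hA; have := congr1 determinant hA.
by rewrite det_mulmx det_tr det1 expr2.
Qed.

Lemma rot_form (R : realType) (A : 'M[R]_2) :
  orthogonal2 A -> \det A = 1 -> A 1 1 = A 0 0 /\ A 1 0 = - A 0 1.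
Proof.
move=> hA dA; rewrite /orthogonal2 in hA.
have e00 := congr1 (fun M : 'M[R]_2 => M 0 0) hA.
have e11 := congr1 (fun M : 'M[R]_2 => M 1 1) hA.
rewrite /= !mul2E !mxE /= in e00 e11.
rewrite det2 in dA.
have h : (A 1 1 - A 0 0) ^+ 2 + (A 1 0 + A 0 1) ^+ 2 = 0.
  have -> : (A 1 1 - A 0 0) ^+ 2 + (A 1 0 + A 0 1) ^+ 2 =
     (A 0 0 * A 0 0 + A 0 1 * A 0 1) + (A 1 0 * A 1 0 + A 1 1 * A 1 1)
     - 2 * (A 0 0 * A 1 1 - A 0 1 * A 1 0).
    by ring.
  by rewrite e00 e11 dA /= mulr1 subrr.
move/eqP: h; rewrite paddr_eq0 ?sqr_ge0 // => /andP[].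
rewrite !sqrf_eq0 subr_eq0 addr_eq0 => /eqP -> /eqP ->; done.
Qed.

Lemma rot_comm (R : realType) (A B : 'M[R]_2) :
  orthogonal2 A -> \det A = 1 -> orthogonal2 B -> \det B = 1 ->
  A *m B = B *m A.
Proof.
move=> oA dA oB dB.
have [a1 a2] := rot_form _ _ oA dA; have [b1 b2] := rot_form _ _ oB dB.
have E : forall i : 'I_2, i = 0 \/ i = 1.
  by case=> [[|[|//]]] Hi; [left|right]; apply: val_inj.
apply/matrixP => i j; rewrite !mul2E.
by case: (E i) => ->; case: (E j) => ->; rewrite ?a1 ?a2 ?b1 ?b2; ring.
Qed.

Lemma det_group (R : realType) (gT : finGroupType) (G : {group gT})
  (f : gT -> 'M[R]_2) :
  {in G, forall x, orthogonal2 (f x)} ->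
  {in G &, forall x y, f (x * y)%g = f x *m f y} ->
  exists K : {group gT}, [/\ (K <| G)%g, {in K, forall x, \det (f x) = 1}
                          & {in G, forall x, (x ^+ 2)%g \in K}].
Proof.
move=> fo fM.
have f1 : f 1%g = 1%:M.
  have h := fM _ _ (group1 G) (group1 G); rewrite mulg1 in h.
  have o := fo _ (group1 G); rewrite /orthogonal2 in o.
  by rewrite -[LHS]mulmx1 -{1}o mulmxA -h o.
have dV : {in G, forall x, \det (f (x^-1)%g) * \det (f x) = 1}.
  move=> x xG; rewrite -det_mulmx -fM ?groupV // mulVg f1 det1 //.
pose S := [set x in G | \det (f x) == 1].
have gS : group_set S.
  apply/group_setP; split; first by rewrite inE group1 f1 det1 eqxx.
  move=> x y; rewrite !inE => /andP[xG /eqP dx] /andP[yG /eqP dy].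
  by rewrite groupM // fM // det_mulmx dx dy mulr1 eqxx.
exists (Group gS); split.
- rewrite /normal; apply/andP; split.
    by apply/subsetP => x; rewrite inE => /andP[].
  apply/subsetP => y yG; rewrite inE; apply/subsetP => z0.
  rewrite mem_conjg => wS; rewrite -(conjgKV y z0).
  move: (z0 ^ y^-1)%g wS => w; rewrite !inE => /andP[wG /eqP dw].
  rewrite conjgE !groupM ?groupV //= !fM ?groupM ?groupV // !det_mulmx dw mul1r.
  by rewrite dV.
- by move=> x; rewrite inE => /andP[_ /eqP].
- move=> x xG; rewrite /= inE groupX //=.
  rewrite expgS expg1 fM // det_mulmx; apply/eqP.
  by have := orth_det _ _ (fo x xG); rewrite GRing.expr2.
Qed.
End Helpers.

Local Open Scope group_scope.

Theorem proposition2p8 (R : realType) (gT : finGroupType) (G : {group gT}) :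
  subgroup_O2cube R G -> cyclic 'F(G) ->
  exists H : {group gT}, [/\ H <| G, cyclic H & 2.-group (G / H)].
Proof.
move=> [f1 [f2 [f3 [fo fM finj]]]] cycF.
have [K1 [nK1 dK1 sq1]] := @det_group R gT G f1 (fun x xG => let: And3 a _ _ := fo x xG in a)
   (fun x y xG yG => let: And3 a _ _ := fM x y xG yG in a).
have [K2 [nK2 dK2 sq2]] := @det_group R gT G f2 (fun x xG => let: And3 _ a _ := fo x xG in a)
   (fun x y xG yG => let: And3 _ a _ := fM x y xG yG in a).
have [K3 [nK3 dK3 sq3]] := @det_group R gT G f3 (fun x xG => let: And3 _ _ a := fo x xG in a)
   (fun x y xG yG => let: And3 _ _ a := fM x y xG yG in a).
pose K := (K1 :&: K2 :&: K3)%G.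
have nK : K <| G by rewrite normalI // normalI.
have sKG : K \subset G by case/andP: nK.
have abK : abelian K.
  apply/centsP => x xK y yK.
  have xG := subsetP sKG x xK; have yG := subsetP sKG y yK.
  move: xK yK; rewrite !inE => /andP[/andP[x1 x2] x3] /andP[/andP[y1 y2] y3].
  have [ox1 ox2 ox3] := fo x xG; have [oy1 oy2 oy3] := fo y yG.
  have [m1 m2 m3] := fM x y xG yG; have [n1 n2 n3] := fM y x yG xG.
  apply: finj; rewrite ?groupM //.
  - by rewrite m1 n1 rot_comm ?dK1.
  - by rewrite m2 n2 rot_comm ?dK2.
  - by rewrite m3 n3 rot_comm ?dK3.
have sKF : K \subset 'F(G) by apply: Fitting_max nK (abelian_nil abK).
exists 'F(G)%G; split => //; first exact: Fitting_normal.
apply/pgroupP => q pq qd.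
have [c cG oc] := Cauchy pq qd.
case/morphimP: cG => x Nx Gx ->{c} in oc *.
have x2 : (x ^+ 2) \in 'F(G).
  apply: (subsetP sKF); rewrite !inE.
  by rewrite sq1 ?sq2 ?sq3.
have : #[coset_morphism 'F(G)%G x] %| 2.
  rewrite order_dvdn /= -(morphX (coset_morphism 'F(G)%G) 2 Nx) /=.
  by rewrite coset_id.
rewrite oc => qd2.
have q2 : q <= 2 by apply: dvdn_leq.
have := prime_gt1 pq.
by rewrite inE; case: q {pq qd oc qd2} q2 => [|[|[|]]].
Qed.
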